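(* Let $\mathfrak g$ be a Lie algebra with scalar product $\langle\cdot,\cdot\rangle$ such that $\operatorname{ad}(X)^\top$ exists for every $X\in\mathfrak g$. Let $A:\mathfrak g\to\mathfrak g^*$, $A(X)=\langle X,\cdot\rangle$, be the inertia operator, $\mathfrak g^*_{\rm reg}=A(\mathfrak g)$ with the scalar product $\langle A(X),A(Y)\rangle:=\langle X,Y\rangle$, and let $\mathfrak g^*_{\rm reg}\rtimes\mathfrak g$ be the semidirect product for the coadjoint action $b=\operatorname{ad}^*$, where $(\operatorname{ad}^*(X)m)(Y)=-m([X,Y])$ (this action preserves $\mathfrak g^*_{\rm reg}$, since $\operatorname{ad}^*(X)A(Y)=-A(\operatorname{ad}(X)^\top Y)$), endowed with the scalar product $\langle m_1,m_2\rangle+\langle X_1,X_2\rangle$. Then for curves $u,v$ in $\mathfrak g$, the curve $(A(v),u)$ satisfies the Euler equation in $\mathfrak g^*_{\rm reg}\rtimes\mathfrak g$ (the geodesic equation for the right invariant metric on the magnetic extension $\mathfrak g^*_{\rm reg}\rtimes G$) if and only if $$\frac{d}{dt}u=-\operatorname{ad}(u)^\top u+\operatorname{ad}(v)^\top v,\qquad \frac{d}{dt}v=\operatorname{ad}(u)v.$$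
   Context: The semidirect product bracket is $[(m_1,X_1),(m_2,X_2)]=(\operatorname{ad}^*(X_1)m_2-\operatorname{ad}^*(X_2)m_1,[X_1,X_2])$. The Euler equation in a Lie algebra $\mathfrak k$ with scalar product is $\dot w=-\operatorname{ad}(w)^\top w$, $\operatorname{ad}(w)^\top$ being the adjoint of $[w,\cdot]$. *)

(* Defs.v *)
From Stdlib Require Import Reals ClassicalEpsilon.
Open Scope R_scope.
Set Implicit Arguments.

Record LieSP : Type := {
  car :> Type;
  add : car -> car -> car;
  opp : car -> car;
  zero : car;
  scal : R -> car -> car;
  br : car -> car -> car;
  ip : car -> car -> R;
  addA : forall x y z, add x (add y z) = add (add x y) z;
  addC : forall x y, add x y = add y x;
  add0 : forall x, add zero x = x;
  addN : forall x, add (opp x) x = zero;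
  scalDr : forall a x y, scal a (add x y) = add (scal a x) (scal a y);
  scalDl : forall a b x, scal (a + b) x = add (scal a x) (scal b x);
  scalA : forall a b x, scal a (scal b x) = scal (a * b) x;
  scal1 : forall x, scal 1 x = x;
  brDl : forall x y z, br (add x y) z = add (br x z) (br y z);
  brZl : forall a x y, br (scal a x) y = scal a (br x y);
  brN : forall x y, br x y = opp (br y x);
  jacobi : forall x y z,
    add (br x (br y z)) (add (br y (br z x)) (br z (br x y))) = zero;
  ipDl : forall x y z, ip (add x y) z = ip x z + ip y z;
  ipZl : forall a x y, ip (scal a x) y = a * ip x y;
  ipC : forall x y, ip x y = ip y x;
  ip_pos : forall x, x <> zero -> 0 < ip x x
}.

Arguments add {g} : rename.
Arguments opp {g} : rename.
Arguments zero {g} : rename.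
Arguments scal {g} : rename.
Arguments br {g} : rename.
Arguments ip {g} : rename.

Section Defs.
Variable g : LieSP.

Definition sub (x y : g) : g := add x (opp y).
Definition norm (x : g) : R := sqrt (ip x x).

Definition has_deriv (c : R -> g) (t : R) (d : g) : Prop :=
  forall eps, 0 < eps -> exists delta, 0 < delta /\
    forall h, h <> 0 -> Rabs h < delta ->
      norm (sub (scal (/ h) (sub (c (t + h)) (c t))) d) < eps.

Definition dual := g -> R.

Definition inertia (X : g) : dual := fun Y => ip X Y.

Definition in_reg (m : dual) : Prop := exists X : g, m = inertia X.

(* a chosen preimage under A (A is injective, so it is unique on g^*_reg) *)
Definition preA (m : dual) : g :=
  epsilon (inhabits (zero : g)) (fun X => m = inertia X).

Definition ip_reg (m1 m2 : dual) : R := ip (preA m1) (preA m2).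

Definition adstar (X : g) (m : dual) : dual := fun Y => - m (br X Y).

Definition kel := (dual * g)%type.
Definition in_k (p : kel) : Prop := in_reg (fst p).

Definition add_k (p q : kel) : kel :=
  (fun Y => fst p Y + fst q Y, add (snd p) (snd q)).
Definition opp_k (p : kel) : kel := (fun Y => - fst p Y, opp (snd p)).
Definition scal_k (a : R) (p : kel) : kel :=
  (fun Y => a * fst p Y, scal a (snd p)).
Definition sub_k (p q : kel) : kel := add_k p (opp_k q).

Definition br_k (p q : kel) : kel :=
  (fun Y => adstar (snd p) (fst q) Y - adstar (snd q) (fst p) Y,
   br (snd p) (snd q)).

Definition ip_k (p q : kel) : R := ip_reg (fst p) (fst q) + ip (snd p) (snd q).
Definition norm_k (p : kel) : R := sqrt (ip_k p p).

Definition has_deriv_k (c : R -> kel) (t : R) (d : kel) : Prop :=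
  forall eps, 0 < eps -> exists delta, 0 < delta /\
    forall h, h <> 0 -> Rabs h < delta ->
      norm_k (sub_k (scal_k (/ h) (sub_k (c (t + h)) (c t))) d) < eps.

Definition is_adT_k (w : kel) (S : kel -> kel) : Prop :=
  (forall y, in_k y -> in_k (S y)) /\
  (forall x y, in_k x -> in_k y -> ip_k (br_k w x) y = ip_k x (S y)).

Definition Euler_k (w : R -> kel) : Prop :=
  forall t, exists d : kel, in_k d /\ has_deriv_k w t d /\
    exists S, is_adT_k (w t) S /\ d = opp_k (S (w t)).

End Defs.
Arguments has_deriv {g}.
Arguments inertia {g}.
Arguments Euler_k {g}.
Arguments has_deriv_k {g}.
Arguments in_reg {g}.
Arguments in_k {g}.
Arguments preA {g}.
Arguments ip_reg {g}.
Arguments adstar {g}.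
Arguments br_k {g}.
Arguments ip_k {g}.
Arguments is_adT_k {g}.
Arguments sub {g}.
Arguments norm {g}.
Arguments add_k {g}.
Arguments opp_k {g}.
Arguments scal_k {g}.
Arguments sub_k {g}.
Arguments norm_k {g}.

(* Main.v *)
Require Import Defs.
From Stdlib Require Import Reals Lra Classical ClassicalEpsilon FunctionalExtensionality.
Open Scope R_scope.

Arguments ipC {l}.
Arguments ipDl {l}.
Arguments ipZl {l}.
Arguments add0 {l}.
Arguments addN {l}.
Arguments addC {l}.
Arguments addA {l}.
Arguments brN {l}.

Section H.
Variable g : LieSP.
Implicit Types x y z a b : g.

Lemma ip0l y : ip (@zero g) y = 0.
Proof. pose proof (ipDl zero zero y) as H. rewrite add0 in H. lra. Qed.
Lemma ip0r y : ip y (@zero g) = 0.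
Proof. rewrite ipC; apply ip0l. Qed.
Lemma ipNl x y : ip (opp x) y = - ip x y.
Proof. pose proof (ipDl (opp x) x y) as H. rewrite addN, ip0l in H. lra. Qed.
Lemma ipNr x y : ip x (opp y) = - ip x y.
Proof. rewrite ipC, ipNl, ipC; reflexivity. Qed.
Lemma ipDr x y z : ip x (add y z) = ip x y + ip x z.
Proof. rewrite ipC, ipDl, (ipC y), (ipC z); reflexivity. Qed.
Lemma ipZr r x y : ip x (scal r y) = r * ip x y.
Proof. rewrite ipC, ipZl, ipC; reflexivity. Qed.
Lemma ip_nonneg x : 0 <= ip x x.
Proof. destruct (classic (x = zero)) as [->|H]. rewrite ip0l; lra.
  apply Rlt_le, ip_pos, H. Qed.
Lemma ip_eq0 x : ip x x = 0 -> x = zero.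
Proof. intro H. destruct (classic (x = zero)) as [|H']; auto.
  pose proof (ip_pos g H'); lra. Qed.
Lemma nondeg a b : (forall Z, ip Z a = ip Z b) -> a = b.
Proof. intro H.
  assert (E : ip (sub a b) (sub a b) = 0).
  { unfold sub at 2. rewrite ipDr, ipNr, H. lra. }
  apply ip_eq0 in E. unfold sub in E.
  rewrite <- (add0 a), <- (addN b), (addC (opp b)), <- addA, (addC (opp b)), E,
    addC, add0. reflexivity. Qed.
Lemma inertia_inj a b : inertia a = inertia b -> a = b.
Proof. intro H; apply nondeg; intro Z. rewrite (ipC Z a), (ipC Z b).
  exact (equal_f H Z). Qed.
Lemma preA_inertia a : preA (inertia a) = a.
Proof. unfold preA.
  pose proof (epsilon_spec (inhabits (@zero g)) (fun X => inertia a = inertia X)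
     (ex_intro _ a eq_refl)) as H. symmetry; apply inertia_inj; exact H. Qed.
Lemma ip_k_inertia a b c d : ip_k (inertia a, b) (inertia c, d) = ip a c + ip b d.
Proof. unfold ip_k, ip_reg; simpl. rewrite !preA_inertia; reflexivity. Qed.
Lemma norm_k_inertia a b : norm_k (inertia a, b) = sqrt (ip a a + ip b b).
Proof. unfold norm_k; rewrite ip_k_inertia; reflexivity. Qed.
Lemma sub_k_inertia r a b c e f k :
  sub_k (scal_k r (sub_k (inertia a, b) (inertia c, e))) (inertia f, k) =
  (inertia (sub (scal r (sub a c)) f), sub (scal r (sub b e)) k).
Proof. unfold sub_k, scal_k, add_k, opp_k; simpl. f_equal.
  apply functional_extensionality; intro Y. unfold inertia, sub.
  rewrite ipDl, ipZl, ipDl, !ipNl. reflexivity. Qed.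

Lemma sqrt_sub_le (a b : R) : 0 <= a -> 0 <= b -> sqrt (a + b) <= sqrt a + sqrt b.
Proof. intros Ha Hb.
  rewrite <- (sqrt_square (sqrt a + sqrt b)).
  2: { pose proof (sqrt_pos a); pose proof (sqrt_pos b); lra. }
  apply sqrt_le_1_alt.
  replace ((sqrt a + sqrt b) * (sqrt a + sqrt b)) with
    (sqrt a * sqrt a + sqrt b * sqrt b + 2 * (sqrt a * sqrt b)) by ring.
  rewrite !sqrt_sqrt by auto.
  pose proof (Rmult_le_pos _ _ (sqrt_pos a) (sqrt_pos b)); lra. Qed.

Lemma deriv_equiv (u v : R -> g) t dv du :
  has_deriv_k (fun t => (inertia (v t), u t)) t (inertia dv, du) <->
  has_deriv v t dv /\ has_deriv u t du.
Proof.
  unfold has_deriv_k, has_deriv. split.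
  - intro H; split; intros eps Heps; destruct (H eps Heps) as [de [Hde Hh]];
    exists de; (split; [exact Hde|]); intros h h0 hl; specialize (Hh h h0 hl);
    cbv beta in Hh; rewrite sub_k_inertia, norm_k_inertia in Hh; unfold norm;
    eapply Rle_lt_trans; try exact Hh; apply sqrt_le_1_alt.
    + pose proof (ip_nonneg (sub (scal (/ h) (sub (u (t + h)) (u t))) du)); lra.
    + pose proof (ip_nonneg (sub (scal (/ h) (sub (v (t + h)) (v t))) dv)); lra.
  - intros [Hv Hu] eps Heps.
    destruct (Hv (eps/2)) as [d1 [Hd1 H1]]; [lra|].
    destruct (Hu (eps/2)) as [d2 [Hd2 H2]]; [lra|].
    exists (Rmin d1 d2); split; [apply Rmin_pos; auto|].
    intros h h0 hl. cbv beta. rewrite sub_k_inertia, norm_k_inertia.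
    specialize (H1 h h0 (Rlt_le_trans _ _ _ hl (Rmin_l _ _))).
    specialize (H2 h h0 (Rlt_le_trans _ _ _ hl (Rmin_r _ _))).
    unfold norm in *.
    eapply Rle_lt_trans; [apply sqrt_sub_le; apply ip_nonneg|]. lra.
Qed.

Lemma br_k_inertia (adT : g -> g -> g)
  (HadT : forall X Y Z : g, ip (br X Y) Z = ip Y (adT X Z)) u v Z W :
  br_k (inertia v, u) (inertia Z, W) = (inertia (add (opp (adT u Z)) (adT W v)), br u W).
Proof. unfold br_k, adstar, inertia; simpl. f_equal.
  apply functional_extensionality; intro Y.
  rewrite ipDl, ipNl, (ipC Z), (ipC v), !HadT, (ipC Y), (ipC Y). lra. Qed.
End H.

Theorem proposition8p1 (g : LieSP) (adT : g -> g -> g)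
  (HadT : forall X Y Z : g, ip (br X Y) Z = ip Y (adT X Z))
  (u v : R -> g) :
  Euler_k (fun t => (inertia (v t), u t)) <->
  (forall t : R,
     has_deriv u t (add (opp (adT (u t) (u t))) (adT (v t) (v t))) /\
     has_deriv v t (br (u t) (v t))).
Proof.
  split.
  - intros HE t. destruct (HE t) as [[m D2] [[D1 Hm] [Hd [S [[Sin Sadj] HdS]]]]].
    simpl in Hm; subst m. cbv beta in HdS, Hd.
    pose proof HdS as HdS0.
    destruct (S (inertia (v t), u t)) as [sm s2] eqn:ES.
    assert (Hs : in_k (S (inertia (v t), u t))) by (apply Sin; exists (v t); reflexivity).
    rewrite ES in Hs. destruct Hs as [s1 Hs1]; simpl in Hs1; subst sm.
    unfold opp_k in HdS; simpl in HdS. injection HdS as E1 E2.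
    assert (HD1 : D1 = opp s1).
    { apply inertia_inj. rewrite E1. apply functional_extensionality; intro Y.
      unfold inertia; rewrite ipNl; reflexivity. }
    subst D1 D2.
    assert (Key : forall Z W, ip Z s1 + ip W s2 =
       ip (add (opp (adT (u t) Z)) (adT W (v t))) (v t) + ip (br (u t) W) (u t)).
    { intros Z W. pose proof (Sadj (inertia Z, W) (inertia (v t), u t)) as A.
      rewrite ES, (@br_k_inertia g adT HadT), !ip_k_inertia in A.
      symmetry; apply A; [exists Z|exists (v t)]; reflexivity. }
    assert (E1' : opp s1 = br (u t) (v t)).
    { apply nondeg; intro Z. pose proof (Key Z zero) as K.
      rewrite ipNr. rewrite ip0l, ipDl, ipNl in K.
      rewrite (ipC (adT zero (v t))), <- (HadT zero), (brN zero), ipNl, (HadT (v t)),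
        (HadT (u t)), !ip0l in K.
      rewrite (ipC (adT (u t) Z)), <- (HadT (u t)), (ipC (br _ _)) in K. lra. }
    assert (E2' : opp s2 = add (opp (adT (u t) (u t))) (adT (v t) (v t))).
    { apply nondeg; intro W. pose proof (Key zero W) as K.
      rewrite ipNr, ipDr, ipNr. rewrite ip0l, ipDl, ipNl in K.
      rewrite (ipC (adT (u t) zero)), <- (HadT (u t)), ip0r in K.
      rewrite (ipC (adT W (v t))), <- (HadT W), (brN W), ipNl, (HadT (v t)), (HadT (u t)) in K.
      lra. }
    rewrite E1', E2' in Hd. apply deriv_equiv in Hd. tauto.
  - intros H t.
    exists (inertia (br (u t) (v t)), add (opp (adT (u t) (u t))) (adT (v t) (v t))).
    split; [exists (br (u t) (v t)); reflexivity|]. split.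
    { apply deriv_equiv. destruct (H t); tauto. }
    exists (fun y => (inertia (opp (br (u t) (preA (fst y)))),
               add (adT (u t) (snd y)) (opp (adT (preA (fst y)) (v t))))).
    split; [split|].
    + intros y _. unfold in_k, in_reg; simpl; eexists; reflexivity.
    + intros [m1 X] [m2 Y] [Z HZ] [Y' HY']; simpl in HZ, HY'; subst m1 m2; simpl.
      rewrite (@br_k_inertia g adT HadT). rewrite !ip_k_inertia, preA_inertia.
      rewrite ipDl, ipNl, (ipC (adT (u t) Z)), <- (HadT (u t) Y' Z),
        (ipC (adT X (v t))), <- (HadT X Y'), (brN X Y'), ipNl, (HadT Y' X),
        (HadT (u t) X Y), ipNr, ipDr, ipNr, (ipC Z). lra.
    + simpl. rewrite preA_inertia. unfold opp_k; simpl. f_equal.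
      * apply functional_extensionality; intro Y. unfold inertia; rewrite ipNl; lra.
      * apply nondeg; intro W. rewrite ipNr, !ipDr, !ipNr. lra.
Qed.
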